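(* Let $\mathcal P$ be a convex family of probability measures on a measurable space $(\Omega,\mathcal F)$ and let $x'\in\mathrm{ca}(\mathcal P)'$. Suppose there exists an $\mathcal F$-measurable function $h$ with $x'(\mu)=\int h\,d\mu$ for all $\mu\in\mathrm{ca}(\mathcal P)$. Then $h$ is unique up to $\mathcal P$-q.s. equality and $h\in\mathbb L^\infty(\mathcal P)$.
   Context: $\mathrm{ca}(\mathcal P)$ is the normed space of finite signed measures $\mu$ on $\mathcal F$ with $|\mu|\ll P$ for some $P\in\mathcal P$, with the total variation norm; $\mathrm{ca}(\mathcal P)'$ is its dual. A set is $\mathcal P$-polar if contained in some $N\in\mathcal F$ with $P(N)=0$ for all $P\in\mathcal P$; $\mathcal P$-q.s. means outside a polar set. $\mathbb L^\infty(\mathcal P)$ is the space of measurable functions bounded $\mathcal P$-q.s., modulo $\mathcal P$-q.s. equality. *)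

(* Defs.v *)
From HB Require Import structures.
From mathcomp Require Import all_boot all_order all_algebra.
From mathcomp Require Import all_classical all_reals all_analysis.
Set Implicit Arguments. Unset Strict Implicit. Unset Printing Implicit Defensive.
Import Order.TTheory GRing.Theory Num.Theory.
Import numFieldNormedType.Exports.
Local Open Scope classical_set_scope.
Local Open Scope ring_scope.

Section signed.
Context d (T : measurableType d) (R : realType).
Variable nu : {charge set T -> \bar R}.

Definition hahnP : set T := projT1 (cid (Hahn_decomposition nu)).
Definition hahnN : set T := projT1 (cid (projT2 (cid (Hahn_decomposition nu)))).
Definition hahnPN : hahn_decomposition nu hahnP hahnN :=
  projT2 (cid (projT2 (cid (Hahn_decomposition nu)))).

Definition tvar := charge_variation hahnPN.
Definition tv_norm : R := fine (tvar setT).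

Definition sintegrable (h : T -> R) : Prop :=
  (tvar).-integrable setT (EFin \o h).

Definition sintegral (h : T -> R) : \bar R :=
  (\int[jordan_pos hahnPN]_x (h x)%:E - \int[jordan_neg hahnPN]_x (h x)%:E)%E.
End signed.

Section caP.
Context d (T : measurableType d) (R : realType).
Variable PP : set (probability T R).

Definition convex_family : Prop :=
  forall (P Q : probability T R) (t : R), PP P -> PP Q -> 0 <= t <= 1 ->
  forall M : probability T R,
    (forall A, measurable A -> M A = (t%:E * P A + (1 - t)%:E * Q A)%E) -> PP M.

(* ca(P): finite signed measures with |mu| << P for some P in PP *)
Definition caP (mu : {charge set T -> \bar R}) : Prop :=
  exists2 P : probability T R, PP P & charge_dominates P (hahnPN mu).

Definition polar (N : set T) : Prop :=
  measurable N /\ forall P : probability T R, PP P -> P N = 0%E.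

(* x' in ca(P)' : linear and continuous (w.r.t. the total variation norm) on ca(P) *)
Definition ca_linear (x : {charge set T -> \bar R} -> R) : Prop :=
  forall (a : R) (mu nu rho : {charge set T -> \bar R}), caP mu -> caP nu -> caP rho ->
    (forall A, measurable A -> rho A = (a%:E * mu A + nu A)%E) ->
    x rho = a * x mu + x nu.

Definition ca_continuous (x : {charge set T -> \bar R} -> R) : Prop :=
  forall mu : {charge set T -> \bar R}, caP mu ->
  forall eps : R, 0 < eps -> exists2 delta : R, 0 < delta &
  forall nu : {charge set T -> \bar R}, caP nu ->
    tv_norm (cadd nu (cscale (-1) mu)) < delta -> `|x nu - x mu| < eps.

Definition ca_dual (x : {charge set T -> \bar R} -> R) : Prop :=
  ca_linear x /\ ca_continuous x.

Definition represents (x : {charge set T -> \bar R} -> R) (h : T -> R) : Prop :=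
  forall mu : {charge set T -> \bar R}, caP mu ->
    sintegrable mu h /\ (x mu)%:E = sintegral mu h.
End caP.

(* Main.v *)
Require Import Defs.
From HB Require Import structures.
From mathcomp Require Import all_boot all_order all_algebra.
From mathcomp Require Import all_classical all_reals all_analysis.
From mathcomp Require Import measurable_realfun.
Import Order.TTheory GRing.Theory Num.Theory.
Local Open Scope classical_set_scope.
Local Open Scope ring_scope.
From mathcomp Require Import lra.

Section nonneg_charge.
Context d (T : measurableType d) (R : realType).
Local Open Scope ereal_scope.
Variable rho : {charge set T -> \bar R}.
Hypothesis rho0 : forall B, measurable B -> 0 <= rho B.

Lemma nn_jneg B : measurable B -> jordan_neg (hahnPN rho) B = 0.
Proof.
move=> mB; rewrite jordan_negE cjordan_negE /crestr0 mem_set// /crestr.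
have [_ [mN Nneg] _ _] := hahnPN rho.
apply/eqP; rewrite oppe_eq0 eq_le; apply/andP; split.
  by apply: Nneg; [exact: measurableI|exact: subIsetr].
by apply: rho0; exact: measurableI.
Qed.

Lemma nn_jpos B : measurable B -> jordan_pos (hahnPN rho) B = rho B.
Proof.
move=> mB; rewrite (jordan_decomp (hahnPN rho) mB) /cadd /= /cscale.
rewrite /cscale.
have E (y : \bar R) : y = 0 -> forall a, a = a + (-1)%:E * y by move=> -> a; rewrite mule0 adde0.
by apply: E; exact: nn_jneg.
Qed.

Lemma nn_tvar B : measurable B -> tvar rho B = rho B.
Proof.
move=> mB; rewrite /tvar /charge_variation /=.
transitivity (rho B + 0); last exact: adde0.
by congr (_ + _); [exact: nn_jpos|exact: nn_jneg].
Qed.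

Lemma nn_sintegral g : Defs.sintegral rho g = \int[jordan_pos (hahnPN rho)]_x (g x)%:E.
Proof.
rewrite /Defs.sintegral.
have -> : \int[jordan_neg (hahnPN rho)]_x (g x)%:E = 0.
  rewrite (eq_measure_integral mzero); last by move=> A mA _; exact: nn_jneg.
  exact: integral_measure_zero.
exact: sube0.
Qed.

End nonneg_charge.

Section rhoc.
Context d (T : measurableType d) (R : realType).
Local Open Scope ereal_scope.
Variables (P : probability T R) (B : set T) (mB : measurable B) (c : R).

Definition rhoc : {charge set T -> \bar R} :=
  cscale c (crestr0 (charge_of_finite_measure P) mB).

Lemma rhocE A : measurable A -> rhoc A = c%:E * P (A `&` B).
Proof. move=> mA; rewrite /rhoc /= /cscale /crestr0; change (c%:E * (if A \in measurable then P (A `&` B) else 0) = c%:E * P (A `&` B)). by rewrite mem_set. Qed.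

Hypothesis c0 : (0 <= c)%R.

Lemma rhoc_ge0 A : measurable A -> 0 <= rhoc A.
Proof. by move=> mA; rewrite rhocE// mule_ge0. Qed.

Lemma rhoc_caP (PP : set (probability T R)) : PP P -> caP PP rhoc.
Proof.
move=> PPP; exists P => // A mA PA0.
have := @nn_tvar _ _ _ _ rhoc_ge0 _ mA; rewrite /tvar => ->.
rewrite rhocE//; apply/eqP; rewrite mule_eq0; apply/orP; right.
rewrite eq_le measure_ge0 andbT -PA0 le_measure// inE//; exact: measurableI.
Qed.

Lemma rhoc_int (f : T -> \bar R) : measurable_fun setT f -> (forall x, 0 <= f x) ->
  \int[jordan_pos (hahnPN rhoc)]_x f x = c%:E * \int[P]_(x in B) f x.
Proof.
move=> mf f0.
rewrite (@ge0_negligible_integral _ _ _ _ _ (~` B)) //; last first.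
  refine (eq_trans (@nn_jpos _ _ _ _ rhoc_ge0 _ (measurableC mB)) _).
  by rewrite rhocE ?setICl ?measure0 ?mule0//; exact: measurableC.
  exact: measurableC.
rewrite setTD setCK.
rewrite (eq_measure_integral (mscale (NngNum c0) P)); last first.
  move=> A mA AB; refine (eq_trans (@nn_jpos _ _ _ _ rhoc_ge0 _ mA) _).
  by rewrite rhocE// setIidl.
rewrite ge0_integral_mscale//.
exact: measurable_funS mf.
Qed.

Lemma rhoc_sint (g : T -> R) : measurable_fun setT g ->
  Defs.sintegral rhoc g =
  c%:E * \int[P]_(x in B) ((EFin \o g)^\+ x) - c%:E * \int[P]_(x in B) ((EFin \o g)^\- x).
Proof.
move=> mg; rewrite nn_sintegral; last exact: rhoc_ge0.
have mEg : measurable_fun setT (EFin \o g) by exact/measurable_EFinP.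
rewrite integralE !rhoc_int//.
- exact: measurable_funeneg.
- exact: measurable_funepos.
Qed.

End rhoc.

Arguments rhoc {d T R} P {B} mB c.

Section main.
Context d (T : measurableType d) (R : realType).
Local Open Scope ereal_scope.

Lemma integrable_of_fin (P : probability T R) (A : set T) (mA : measurable A)
  (g : T -> R) : measurable_fun setT g ->
  \int[P]_(x in A) ((EFin \o g)^\+ x) \is a fin_num ->
  \int[P]_(x in A) ((EFin \o g)^\- x) \is a fin_num ->
  P.-integrable A (EFin \o g).
Proof.
move=> mg f1 f2.
have mEg : measurable_fun A (EFin \o g).
  apply: measurable_funS (_ : measurable_fun setT (EFin \o g)) => //.
  exact/measurable_EFinP.
apply/integrableP; split => //.
rewrite (_ : (fun x => `|(EFin \o g) x|) = abse \o (EFin \o g)) // fune_abse.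
rewrite ge0_integralD//.
- by rewrite lte_add_pinfty// ltey_eq ?f1 ?f2.
- exact: measurable_funepos.
- exact: measurable_funeneg.
Qed.

Lemma uniq_half (PP : set (probability T R)) (x : {charge set T -> \bar R} -> R)
  (h1 h2 : T -> R) : measurable_fun setT h1 -> measurable_fun setT h2 ->
  represents PP x h1 -> represents PP x h2 ->
  forall P : probability T R, PP P ->
  P (setT `&` [set w | (h2 w)%:E < (h1 w)%:E]) = 0.
Proof.
move=> mh1 mh2 r1 r2 P PPP.
set A := (setT `&` _).
have mE1 : measurable_fun setT (EFin \o h1) by exact/measurable_EFinP.
have mE2 : measurable_fun setT (EFin \o h2) by exact/measurable_EFinP.
have mA : measurable A by exact: measurable_lte.
have c0 : (0 <= 1 :> R)%R by [].
have cP := @rhoc_caP _ _ _ P _ mA 1 c0 PP PPP.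
have [_ E1] := r1 _ cP; have [_ E2] := r2 _ cP.
rewrite (@rhoc_sint _ _ _ P _ mA 1 c0 h1 mh1) !mul1e in E1.
rewrite (@rhoc_sint _ _ _ P _ mA 1 c0 h2 mh2) !mul1e in E2.
have F1 : \int[P]_(x in A) ((EFin \o h1)^\+ x) - \int[P]_(x in A) ((EFin \o h1)^\- x) \is a fin_num by rewrite -E1.
have F2 : \int[P]_(x in A) ((EFin \o h2)^\+ x) - \int[P]_(x in A) ((EFin \o h2)^\- x) \is a fin_num by rewrite -E2.
move: (F1); rewrite fin_numB => /andP[F1p F1n].
move: (F2); rewrite fin_numB => /andP[F2p F2n].
have i1 := integrable_of_fin P A mA h1 mh1 F1p F1n.
have i2 := integrable_of_fin P A mA h2 mh2 F2p F2n.
have I0 : \int[P]_(x in A) ((h1 x)%:E - (h2 x)%:E) = 0.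
  rewrite integralB_EFin// integralE [X in _ - X]integralE.
  by rewrite -E1 -E2 subee.
have mf : measurable_fun A (fun w => (h1 w)%:E - (h2 w)%:E).
  apply: measurable_funS (emeasurable_funB mE1 mE2) => //.
have I1 : \int[P]_(x in A) `|(h1 x)%:E - (h2 x)%:E| = 0.
  rewrite -I0; apply: eq_integral => w; rewrite inE => -[_ /= Aw].
  by rewrite -EFinD ger0_norm// subr_ge0 ltW// -lte_fin.
have := (ae_eq_integral_abs P mA mf).1 I1.
case=> N [mN PN0 sub].
apply/eqP; rewrite eq_le measure_ge0 andbT -PN0 le_measure ?inE//.
move=> w Aw; apply: sub => /=; move=> /(_ Aw) /eqP.
case: Aw => _ /= lt.
rewrite -EFinD eqe subr_eq0 => /eqP E.
by move: lt; rewrite E ltxx.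
Qed.


Lemma step (PP : set (probability T R)) (x : {charge set T -> \bar R} -> R)
  (h : T -> R) : measurable_fun setT h -> represents PP x h ->
  x czero = 0%R -> forall delta e : R,
  (forall nu : {charge set T -> \bar R}, caP PP nu ->
    (tv_norm (cadd nu (cscale (-1) czero)) < delta)%R -> (`|x nu - x czero| < 1)%R) ->
  (0 < e)%R -> (e < delta)%R ->
  forall (P : probability T R) (B : set T) (mB : measurable B), PP P -> P B != 0 ->
  exists c : R, [/\ (0 <= c)%R, (c * fine (P B) = e)%R, (`|x (rhoc P mB c)| < 1)%R &
    (x (rhoc P mB c))%:E = c%:E * \int[P]_(x in B) ((EFin \o h)^\+ x)
                         - c%:E * \int[P]_(x in B) ((EFin \o h)^\- x)].
Proof.
move=> mh rep xz delta e Hd e0 ed P B mB PPP PB.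
have PBf : P B \is a fin_num by exact: fin_num_measure.
set p := fine (P B).
have p0 : (0 < p)%R.
  rewrite /p fine_gt0// lt0e PB measure_ge0 /=.
  by rewrite ltey_eq PBf.
have c0 : (0 <= e / p)%R by rewrite divr_ge0// ltW.
exists (e / p)%R; split => //.
- by rewrite mulrAC -mulrA divff ?mulr1// gt_eqF.
- have cP := @rhoc_caP _ _ _ P _ mB _ c0 PP PPP.
  have := Hd _ cP; rewrite xz subr0; apply.
  rewrite /tv_norm.
  have nn : forall A, measurable A -> 0 <= cadd (rhoc P mB (e / p)%R) (cscale (-1) czero) A.
    move=> A mA; rewrite /cadd /=.
    apply: adde_ge0; first exact: (@rhoc_ge0 _ _ _ P _ mB _ c0).
    by rewrite /cscale /czero mule0.
  have := @nn_tvar _ _ _ _ nn _ measurableT; rewrite /tvar => ->.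
  have -> : charge_cadd__canonical__charge_Charge (rhoc P mB (e / p)%R)
      (cscale (-1) czero) [set: T] = (e%:E).
    rewrite /= /cadd /=.
    have -> : cscale (-1) (@czero _ T R) [set: T] = 0.
      by rewrite /cscale /czero mule0.
    rewrite adde0 (@rhocE _ _ _ P _ mB _ _ measurableT) setTI -(fineK PBf) -EFinM.
    by rewrite -/p mulrAC -mulrA divff ?mulr1 ?gt_eqF.
  by [].
- have [_ ->] := rep _ (@rhoc_caP _ _ _ P _ mB _ c0 PP PPP).
  exact: rhoc_sint.
Qed.

Lemma bound_part (PP : set (probability T R)) (x : {charge set T -> \bar R} -> R)
  (h : T -> R) : measurable_fun setT h -> ca_continuous PP x -> represents PP x h ->
  exists C : R, exists2 N : set T, polar PP N & forall w, ~ N w -> (`|h w| <= C)%R.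
Proof.
move=> mh cont rep.
have mEh : measurable_fun setT (EFin \o h) by exact/measurable_EFinP.
pose An (n : nat) := setT `&` [set w | (n%:R)%:E < (`|h w|)%:E].
have mAn n : measurable (An n).
  apply: measurable_lte => //; apply/measurable_EFinP.
  exact: measurableT_comp.
apply: contrapT => Hno.
have NP n : exists2 P : probability T R, PP P & P (An n) != 0.
  apply: contrapT => H; apply: Hno; exists n%:R, (An n).
    split => // P PPP; apply/eqP; apply: contrapT => H2; apply: H; exists P => //.
    exact/negP.
  move=> w Anw; rewrite leNgt; apply/negP => lt; apply: Anw.
  by split => //=; rewrite lte_fin.
have [P0 PP0 _] := NP 0%N.
have z0 : forall A, measurable A -> 0 <= (@czero _ T R) A by move=> *; exact: lexx.
have caz : caP PP czero.
  exists P0 => // A mA _; have := @nn_tvar _ _ _ _ z0 _ mA; rewrite /tvar => ->.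
  by [].
have xz : x czero = 0%R.
  have [_ E] := rep _ caz; move: E; rewrite nn_sintegral //.
  rewrite (eq_measure_integral mzero); last first.
    by move=> A mA _; exact: (@nn_jpos _ _ _ _ z0 _ mA).
  by rewrite integral_measure_zero => -[].
have [delta d0 Hd] := cont _ caz 1%R ltr01.
pose e := (delta / 2)%R.
have e0 : (0 < e)%R by rewrite divr_gt0.
have ed : (e < delta)%R by rewrite /e ltr_pdivrMr// ltr_pMr// ltr1n.
pose n := (Num.truncn (1 / e)).+1.
have ne : (1 < n%:R * e)%R.
  rewrite -ltr_pdivrMr//; rewrite /n; exact: truncnS_gt.
have [P PPP PA] := NP n.
pose Bp := setT `&` [set w | (n%:R)%:E < (h w)%:E].
pose Bn := setT `&` [set w | (h w)%:E < (- n%:R)%:E].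
have mBp : measurable Bp by apply: measurable_lte => //; exact: measurable_cst.
have mBn : measurable Bn by apply: measurable_lte => //; exact: measurable_cst.
have sub : An n `<=` Bp `|` Bn.
  move=> w [_ /=]; rewrite lte_fin ltr_normr => /orP[lt|lt]; [left|right].
    by split => //=; rewrite lte_fin.
  by split => //=; rewrite lte_fin ltrNr.
have n0 : (0 <= n%:R :> R)%R by exact: ler0n.
have : P Bp != 0 \/ P Bn != 0.
  apply: contrapT => /not_orP[/negP/negPn/eqP z1 /negP/negPn/eqP z2].
  move: PA => /negP; apply.
  rewrite eq_le measure_ge0 andbT.
  apply: le_trans (le_measure _ _ _ sub) _; rewrite ?inE//; first exact: measurableU.
  apply: le_trans (measureU2 _ _ _) _ => //.
  suff -> : P Bp + P Bn = 0 + 0 by rewrite adde0.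
  by congr (_ + _); [exact: z1|exact: z2].
have ltn : forall r : R, (`|r| < 1)%R -> (n%:R * e <= r)%R -> False.
  by move=> r r1 r2; have := ler_norm r; lra.
case => [PB|PB].
- have [c [c0 cpe xlt E]] := step PP x h mh rep xz delta e Hd e0 ed P Bp mBp PPP PB.
  have hpos : forall v, Bp v -> 0 <= (EFin \o h) v.
    by move=> v [_ /=]; rewrite !lte_fin => lt; rewrite lee_fin (le_trans n0 (ltW lt)).
  have I0 : \int[P]_(x in Bp) (EFin \o h)^\- x = 0.
    by apply: integral0_eq => w Bw; apply: (ge0_funenegE hpos); rewrite inE.
  have I1 : (n%:R)%:E * P Bp <= \int[P]_(x in Bp) (EFin \o h)^\+ x.
    rewrite -integral_cst//; apply: ge0_le_integral => //.
    - exact: measurable_funS (measurable_funepos mEh).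
    - move=> v Bv; rewrite (ge0_funeposE hpos) ?inE//.
      by case: Bv => _ /= /ltW.
  move: E; rewrite I0 mule0 sube0 => E.
  have PBf : P Bp \is a fin_num by exact: fin_num_measure.
  apply: (ltn _ xlt); rewrite -lee_fin E.
  apply: le_trans (lee_wpmul2l _ I1); last by rewrite lee_fin.
  by rewrite -(fineK PBf) -!EFinM lee_fin -cpe mulrCA mulrA.
- have [c [c0 cpe xlt E]] := step PP x h mh rep xz delta e Hd e0 ed P Bn mBn PPP PB.
  have hneg : forall v, Bn v -> (EFin \o h) v <= 0.
    move=> v [_ /=]; rewrite !lte_fin => lt; rewrite lee_fin.
    by apply: (le_trans (ltW lt)); rewrite oppr_le0.
  have I0 : \int[P]_(x in Bn) (EFin \o h)^\+ x = 0.
    by apply: integral0_eq => w Bw; apply: (le0_funeposE hneg); rewrite inE.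
  have I1 : (n%:R)%:E * P Bn <= \int[P]_(x in Bn) (EFin \o h)^\- x.
    rewrite -integral_cst//; apply: ge0_le_integral => //.
    - exact: measurable_funS (measurable_funeneg mEh).
    - move=> v Bv; rewrite (le0_funenegE hneg) ?inE//.
      case: Bv => _ /=; rewrite !lte_fin lee_fin ltrNr => /ltW //.
  move: E; rewrite I0 mule0 sub0e => E.
  have PBf : P Bn \is a fin_num by exact: fin_num_measure.
  apply: (ltn (- x (rhoc P mBn c))%R); first by rewrite normrN.
  rewrite -lee_fin EFinN E oppeK.
  apply: le_trans (lee_wpmul2l _ I1); last by rewrite lee_fin.
  by rewrite -(fineK PBf) -!EFinM lee_fin -cpe mulrCA mulrA.
Qed.

End main.


Theorem lemma3p17 (d : measure_display) (T : measurableType d) (R : realType)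
  (PP : set (probability T R)) (x : {charge set T -> \bar R} -> R) (h : T -> R) :
  convex_family PP -> ca_dual PP x ->
  measurable_fun setT h -> represents PP x h ->
  (forall h' : T -> R, measurable_fun setT h' -> represents PP x h' ->
     exists2 N : set T, polar PP N & forall w, ~ N w -> h w = h' w) /\
  (exists C : R, exists2 N : set T, polar PP N & forall w, ~ N w -> `|h w| <= C).
Proof.
move=> _ [_ cont] mh rep; split; last exact: (@bound_part _ _ _ PP x h mh cont rep).
move=> h' mh' rep'.
have mE : measurable_fun setT (EFin \o h) by exact/measurable_EFinP.
have mE' : measurable_fun setT (EFin \o h') by exact/measurable_EFinP.
have m1 : measurable (setT `&` [set w | ((h' w)%:E < (h w)%:E)%E]).
  exact: measurable_lte.
have m2 : measurable (setT `&` [set w | ((h w)%:E < (h' w)%:E)%E]).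
  exact: measurable_lte.
exists ((setT `&` [set w | ((h' w)%:E < (h w)%:E)%E]) `|`
        (setT `&` [set w | ((h w)%:E < (h' w)%:E)%E])).
  split; first exact: measurableU.
  move=> P PPP; apply/eqP; rewrite eq_le measure_ge0 andbT.
  apply: le_trans (measureU2 _ _ _) _ => //.
  have z1 := @uniq_half _ _ _ PP x h h' mh mh' rep rep' P PPP.
  have z2 := @uniq_half _ _ _ PP x h' h mh' mh rep' rep P PPP.
  suff -> : (P (setT `&` [set w | ((h' w)%:E < (h w)%:E)%E]) +
            P (setT `&` [set w | ((h w)%:E < (h' w)%:E)%E]) = 0 + 0)%E
    by rewrite adde0.
  by congr (_ + _)%E; [exact: z1|exact: z2].
move=> w Nw; case: (ltgtP (h w) (h' w)) => // lt; exfalso; apply: Nw.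
  by right; split => //=; rewrite lte_fin.
by left; split => //=; rewrite lte_fin.
Qed.
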